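(* Let $X$ be an infinite dimensional Banach lattice in which $\ell_\infty$ is finitely lattice representable. Then $X_L=\ell_\infty$ with equality of norms.
   Context: Banach lattices are real; disjoint means $|x|\wedge|y|=0$. $\ell_\infty$ is finitely lattice representable in $X$ if for every $n$ and $\varepsilon>0$ there are pairwise disjoint $x_1,\dots,x_n\in X$ with $\max_i|a_i|\le\|\sum a_ix_i\|_X\le(1+\varepsilon)\max_i|a_i|$ for all $a\in\mathbb R^n$. $\mathfrak B_n(X)$ is the set of $n$-tuples of pairwise disjoint norm-one elements of $X$; for $a\in\mathbb R^n$, $\Phi_n(a):=\inf\{\|\sum_{i=1}^n a_ix_i\|_X:(x_i)\in\mathfrak B_n(X)\}$ and $\|a\|_{X_L(n)}:=\inf\{\sum_{k\in F}\Phi_n(a^k):F\text{ finite}, a^k\in\mathbb R^n, a=\sum_{k\in F}a^k\}$; $X_L$ is the space of real sequences $a$ with $\|a\|_{X_L}:=\sup_n\|(a_i)_{i=1}^n\|_{X_L(n)}<\infty$. *)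

(* Defs.v *)
From HB Require Import structures.
From mathcomp Require Import all_boot all_order all_algebra.
From mathcomp Require Import all_classical all_reals all_analysis.
Set Implicit Arguments. Unset Strict Implicit. Unset Printing Implicit Defensive.
Import Order.TTheory GRing.Theory Num.Theory.
Import numFieldNormedType.Exports.
Local Open Scope classical_set_scope.
Local Open Scope ring_scope.

Record banach_lattice (R : realType) (X : completeNormedModType R) := {
  ble : X -> X -> Prop;
  bjoin : X -> X -> X;
  ble_refl : forall x, ble x x;
  ble_antisym : forall x y, ble x y -> ble y x -> x = y;
  ble_trans : forall x y z, ble x y -> ble y z -> ble x z;
  ble_add : forall x y z, ble x y -> ble (x + z) (y + z);
  ble_scale : forall (a : R) x y, 0 <= a -> ble x y -> ble (a *: x) (a *: y);
  bjoin_ubl : forall x y, ble x (bjoin x y);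
  bjoin_ubr : forall x y, ble y (bjoin x y);
  bjoin_least : forall x y z, ble x z -> ble y z -> ble (bjoin x y) z;
  bnorm_lattice : forall x y,
    ble (bjoin x (- x)) (bjoin y (- y)) -> `|x| <= `|y|
}.

Section BL.
Variables (R : realType) (X : completeNormedModType R) (L : banach_lattice X).

Definition babs (x : X) : X := bjoin L x (- x).
Definition bmeet (x y : X) : X := - bjoin L (- x) (- y).
Definition bdisjoint (x y : X) : Prop := bmeet (babs x) (babs y) = 0.

Definition supnorm (n : nat) (a : 'I_n -> R) : R := \big[Num.max/0]_(i < n) `|a i|.

Definition linfty_flr : Prop :=
  forall (n : nat) (eps : R), 0 < eps ->
    exists x : 'I_n -> X,
      (forall i j : 'I_n, i != j -> bdisjoint (x i) (x j)) /\
      (forall a : 'I_n -> R,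
         supnorm a <= `|\sum_(i < n) a i *: x i| /\
         `|\sum_(i < n) a i *: x i| <= (1 + eps) * supnorm a).

Definition Bn (n : nat) : set ('I_n -> X) :=
  [set x | (forall i j : 'I_n, i != j -> bdisjoint (x i) (x j)) /\
           (forall i, `|x i| = 1)].

Definition Phi (n : nat) (a : 'I_n -> R) : R :=
  inf [set `|\sum_(i < n) a i *: x i| | x in @Bn n].

Definition XLn_norm (n : nat) (a : 'I_n -> R) : R :=
  inf [set \sum_(b <- s) Phi b |
        s in [set s : seq ('I_n -> R) | forall i, a i = \sum_(b <- s) b i]].

(* ||a||_{X_L} = sup_n ||(a_i)_{i<n}||_{X_L(n)}, in the extended reals
   (a is in X_L iff this is finite) *)
Definition XL_norm (a : nat -> R) : \bar R :=
  ereal_sup [set (XLn_norm (fun i : 'I_n => a (nat_of_ord i)))%:E | n in [set: nat]].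

End BL.

(* ||a||_infty = sup_i |a_i| in the extended reals (a in l_infty iff finite) *)
Definition linf_norm (R : realType) (a : nat -> R) : \bar R :=
  ereal_sup [set (`|a i|)%:E | i in [set: nat]].

Definition infinite_dimensional (R : realType) (X : normedModType R) : Prop :=
  forall n : nat, exists v : 'I_n -> X,
    forall c : 'I_n -> R, \sum_(i < n) c i *: v i = 0 -> forall i, c i = 0.

(* Main.v *)
Require Import Defs.
From HB Require Import structures.
From mathcomp Require Import all_boot all_order all_algebra.
From mathcomp Require Import all_classical all_reals all_analysis.
From mathcomp Require Import lra.
Set Implicit Arguments. Unset Strict Implicit. Unset Printing Implicit Defensive.
Import Order.TTheory GRing.Theory Num.Theory.
Import numFieldNormedType.Exports.
Local Open Scope classical_set_scope.
Local Open Scope ring_scope.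

Section Riesz.
Variables (R : realType) (X : completeNormedModType R) (L : banach_lattice X).
Local Notation le := (ble L).
Local Notation jn := (bjoin L).

Lemma le_tr x y z : le x y -> le y z -> le x z.
Proof. exact: ble_trans. Qed.

Lemma le_addl x y z : le x y -> le (z + x) (z + y).
Proof. by move=> h; rewrite ![z + _]addrC; apply: ble_add. Qed.

Lemma le_add2 a b c d : le a b -> le c d -> le (a + c) (b + d).
Proof.
move=> h1 h2; apply: (@le_tr _ (b + c)); first exact: ble_add.
exact: le_addl.
Qed.

Lemma le_opp x y : le x y -> le (- y) (- x).
Proof.
move=> h; have := ble_add (- x - y) h.
by rewrite addrA subrr add0r (addrC y) subrK.
Qed.

Lemma le_oppK x y : le (- y) (- x) -> le x y.
Proof. by move/le_opp; rewrite !opprK. Qed.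

Lemma jn_comm x y : jn x y = jn y x.
Proof.
apply: ble_antisym; apply: bjoin_least;
  (apply: bjoin_ubl || apply: bjoin_ubr).
Qed.

Lemma jn_add x y z : jn x y + z = jn (x + z) (y + z).
Proof.
apply: ble_antisym; last first.
  by apply: bjoin_least; apply: ble_add; [apply: bjoin_ubl|apply: bjoin_ubr].
have h : le (jn x y) (jn (x + z) (y + z) - z).
  apply: bjoin_least.
    by have := ble_add (- z) (bjoin_ubl L (x + z) (y + z)); rewrite addrK.
  by have := ble_add (- z) (bjoin_ubr L (x + z) (y + z)); rewrite addrK.
by have := ble_add z h; rewrite subrK.
Qed.

Lemma jn_scale (m : R) x y : 0 <= m -> m *: jn x y = jn (m *: x) (m *: y).
Proof.
rewrite le_eqVlt => /orP [/eqP <-|mp].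
  by rewrite !scale0r; apply: ble_antisym; [apply: bjoin_ubl|apply: bjoin_least; apply: ble_refl].
apply: ble_antisym; last first.
  by apply: bjoin_least; apply: ble_scale; rewrite ?ltW //; [apply: bjoin_ubl|apply: bjoin_ubr].
have h : le (jn x y) (m^-1 *: jn (m *: x) (m *: y)).
  have mi : 0 <= m^-1 by rewrite invr_ge0 ltW.
  apply: bjoin_least.
    by have := ble_scale mi (bjoin_ubl L (m *: x) (m *: y)); rewrite scalerA mulVf ?gt_eqF // scale1r.
  by have := ble_scale mi (bjoin_ubr L (m *: x) (m *: y)); rewrite scalerA mulVf ?gt_eqF // scale1r.
by have := ble_scale (ltW mp) h; rewrite scalerA mulfV ?gt_eqF // scale1r.
Qed.

Lemma mt_lbl x y : le (bmeet L x y) x.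
Proof. by apply: le_oppK; rewrite /bmeet opprK; apply: bjoin_ubl. Qed.
Lemma mt_lbr x y : le (bmeet L x y) y.
Proof. by apply: le_oppK; rewrite /bmeet opprK; apply: bjoin_ubr. Qed.
Lemma mt_glb x y z : le z x -> le z y -> le z (bmeet L x y).
Proof.
move=> h1 h2; apply: le_oppK; rewrite /bmeet opprK.
by apply: bjoin_least; apply: le_opp.
Qed.

Lemma mt_scale (m : R) x y : 0 <= m -> m *: bmeet L x y = bmeet L (m *: x) (m *: y).
Proof. by move=> m0; rewrite /bmeet scalerN jn_scale // !scalerN. Qed.

Lemma mt_mono r a b : le a b -> le (bmeet L r a) (bmeet L r b).
Proof.
move=> h; apply: mt_glb; first exact: mt_lbl.
exact: le_tr (mt_lbr _ _) h.
Qed.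

Lemma mt_ge0 a b : le 0 a -> le 0 b -> le 0 (bmeet L a b).
Proof. by move=> *; apply: mt_glb. Qed.

Lemma sum_jn_mt x y : x + y = jn x y + bmeet L x y.
Proof.
rewrite /bmeet.
have -> : jn (- x) (- y) = jn x y - x - y.
  rewrite -addrA jn_add jn_comm; congr jn.
    by rewrite addrA subrr add0r.
  by rewrite addrCA subrr addr0.
by rewrite !opprD !opprK !addrA subrr add0r.
Qed.

Lemma babs_ge0 x : le 0 (babs L x).
Proof.
have h : le (x + - x) (babs L x + babs L x).
  by apply: le_add2; [apply: bjoin_ubl|apply: bjoin_ubr].
rewrite subrr -mulr2n -scaler_nat in h.
have := ble_scale (_ : 0 <= 2%:R^-1) h.
by rewrite scaler0 scalerA mulVf ?pnatr_eq0 // scale1r; apply; rewrite invr_ge0.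
Qed.

Lemma babsN x : babs L (- x) = babs L x.
Proof. by rewrite /babs opprK jn_comm. Qed.

Lemma babsZ (c : R) x : babs L (c *: x) = `|c| *: babs L x.
Proof.
case: (leP 0 c) => c0.
  by rewrite ger0_norm // /babs jn_scale // scalerN.
rewrite ltr0_norm // -babsN -scaleNr /babs jn_scale ?oppr_ge0 ?ltW //.
by rewrite scalerN scaleNr opprK.
Qed.

Lemma babs_tri x y : le (babs L (x + y)) (babs L x + babs L y).
Proof.
apply: bjoin_least.
  by apply: le_add2; apply: bjoin_ubl.
by rewrite opprD; apply: le_add2; apply: bjoin_ubr.
Qed.

Lemma jn_ub_le x y z : le (jn x y) z -> le x z /\ le y z.
Proof. by move=> h; split; apply: le_tr h; [apply: bjoin_ubl|apply: bjoin_ubr]. Qed.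

Lemma disj_abs u v : bdisjoint L u v -> le (babs L u) (babs L (u + v)).
Proof.
rewrite /bdisjoint => d.
set p := babs L u; set q := babs L v.
have pq : p + q = jn p q by rewrite sum_jn_mt d addr0.
have h1 : le (p - q) (babs L (u + v)).
  have := babs_tri (u + v) (- v); rewrite addrK babsN -/p -/q => h.
  by have := ble_add (- q) h; rewrite addrK.
have h2 : le (q - p) (babs L (u + v)).
  have := babs_tri (u + v) (- u); rewrite (addrC u) addrK babsN -/p -/q => h.
  by have := ble_add (- p) h; rewrite addrK.
have h3 : jn (p - q) (q - p) = p + q.
  have e : forall a b : X, a - b = 2%:R *: a - (a + b).
    by move=> a b; rewrite scaler_nat mulr2n opprD addrA addrK.
  rewrite (e p q) (e q p) (addrC q p) -jn_add -jn_scale ?ler0n // -pq scaler_nat mulr2n addrK //.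
have h4 : le (p + q) (babs L (u + v)) by rewrite -h3; apply: bjoin_least.
apply: le_tr h4; have := le_addl p (babs_ge0 v); by rewrite addr0.
Qed.

Lemma mt_subadd r p q : le 0 r -> le 0 p -> le 0 q ->
  le (bmeet L r (p + q)) (bmeet L r p + bmeet L r q).
Proof.
move=> r0 p0 q0; set w := bmeet L r (p + q).
suff h : le (w - bmeet L r p) (bmeet L r q).
  by have := ble_add (bmeet L r p) h; rewrite subrK addrC.
apply: mt_glb.
  have h := ble_add w (le_opp (mt_ge0 r0 p0)); rewrite oppr0 add0r (addrC _ w) in h.
  exact: le_tr h (mt_lbl _ _).
rewrite /bmeet opprK addrC jn_add; apply: bjoin_least.
  apply: le_tr q0; have := ble_add (- r) (mt_lbl r (p + q)).
  by rewrite -/w subrr addrC.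
have := ble_add (- p) (mt_lbr r (p + q)); rewrite -/w (addrC p q) addrK addrC //.
Qed.

Lemma disj_sym u v : bdisjoint L u v -> bdisjoint L v u.
Proof. by rewrite /bdisjoint /bmeet jn_comm. Qed.

Lemma disj_scale u v (c d : R) : bdisjoint L u v -> bdisjoint L (c *: u) (d *: v).
Proof.
rewrite /bdisjoint !babsZ => h.
set m := `|c| + `|d|.
have m0 : 0 <= m by rewrite addr_ge0.
have hc : le (`|c| *: babs L u) (m *: babs L u).
  have := ble_scale (_ : 0 <= `|d|) (babs_ge0 u).
  rewrite scaler0 => /(_ (normr_ge0 _)) /(le_addl (`|c| *: babs L u)).
  by rewrite addr0 -scalerDl.
have hd : le (`|d| *: babs L v) (m *: babs L v).
  have := ble_scale (_ : 0 <= `|c|) (babs_ge0 v).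
  rewrite scaler0 => /(_ (normr_ge0 _)) /(le_addl (`|d| *: babs L v)).
  by rewrite addr0 -scalerDl addrC.
apply: (@ble_antisym _ _ L).
  have : le (bmeet L (`|c| *: babs L u) (`|d| *: babs L v)) (m *: bmeet L (babs L u) (babs L v)).
    rewrite mt_scale //; apply: mt_glb.
      exact: le_tr (mt_lbl _ _) hc.
    exact: le_tr (mt_lbr _ _) hd.
  by rewrite h scaler0.
apply: mt_ge0.
  by have := ble_scale (normr_ge0 c) (babs_ge0 u); rewrite scaler0.
by have := ble_scale (normr_ge0 d) (babs_ge0 v); rewrite scaler0.
Qed.

Lemma disj0 u : bdisjoint L u 0.
Proof.
rewrite /bdisjoint.
have -> : babs L 0 = 0 by rewrite -(scale0r 0) babsZ normr0 !scale0r.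
apply: (@ble_antisym _ _ L); first exact: mt_lbr.
by apply: mt_ge0; [apply: babs_ge0|apply: ble_refl].
Qed.

Lemma disj_add u v w : bdisjoint L u v -> bdisjoint L u w -> bdisjoint L u (v + w).
Proof.
rewrite /bdisjoint => h1 h2.
apply: (@ble_antisym _ _ L); last by apply: mt_ge0; apply: babs_ge0.
apply: le_tr (mt_mono _ (babs_tri v w)) _.
have := mt_subadd (babs_ge0 u) (babs_ge0 v) (babs_ge0 w).
by rewrite h1 h2 addr0.
Qed.

End Riesz.
Section Sup.
Variable R : realType.

Lemma supnorm_ge n (a : 'I_n -> R) i : `|a i| <= supnorm a.
Proof. exact: le_bigmax. Qed.

Lemma supnorm_le n (a : 'I_n -> R) c : 0 <= c -> (forall i, `|a i| <= c) -> supnorm a <= c.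
Proof. by move=> c0 h; apply: bigmax_le. Qed.

Lemma supnorm_ge0 n (a : 'I_n -> R) : 0 <= supnorm a.
Proof.
rewrite /supnorm; elim/big_ind: _ => //.
by move=> x y x0 y0; rewrite le_max x0.
Qed.

Lemma supnorm_sum n (s : seq ('I_n -> R)) :
  supnorm (fun i => \sum_(b <- s) b i) <= \sum_(b <- s) supnorm b.
Proof.
elim: s => [|b s IH].
  by rewrite big_nil; apply: supnorm_le => // i; rewrite big_nil normr0.
rewrite big_cons; apply: supnorm_le.
  by apply: addr_ge0; [apply: supnorm_ge0|apply: sumr_ge0 => *; apply: supnorm_ge0].
move=> i; rewrite big_cons; apply: le_trans (ler_normD _ _) _.
apply: lerD; first exact: supnorm_ge.
exact: le_trans (supnorm_ge (fun i => \sum_(b <- s) b i) i) IH.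
Qed.

End Sup.

Section Main.
Variables (R : realType) (X : completeNormedModType R) (L : banach_lattice X).

Lemma Bn_lower n (x : 'I_n -> X) a : Bn L x -> supnorm a <= `|\sum_i a i *: x i|.
Proof.
case=> hd hn; apply: supnorm_le => // i.
rewrite (bigD1 i) //=.
have -> : `|a i| = `|a i *: x i| by rewrite normrZ hn mulr1.
apply: bnorm_lattice; apply: disj_abs.
elim/big_ind: _ => //.
- exact: disj0.
- by move=> u v; apply: disj_add.
- by move=> j ji; apply: disj_scale; apply: hd; rewrite eq_sym.
Qed.

Lemma flr_tuple n eps : linfty_flr L -> 0 < eps ->
  exists y : 'I_n -> X, Bn L y /\
    forall a, `|\sum_i a i *: y i| <= (1 + eps) * supnorm a.
Proof.
move=> H e0; have [x [hd hb]] := H n eps e0.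
have hx : forall i, 1 <= `|x i| <= 1 + eps.
  move=> i; set e := fun j : 'I_n => ((j == i)%:R : R).
  have se : \sum_j e j *: x j = x i.
    rewrite (bigD1 i) //= /e eqxx scale1r big1 ?addr0 // => j /negbTE ->.
    by rewrite scale0r.
  have s1 : supnorm e = 1.
    apply: le_anti; apply/andP; split.
      by apply: supnorm_le => // j; rewrite /e; case: (j == i); rewrite ?normr1 ?normr0.
    by have := supnorm_ge e i; rewrite /e eqxx normr1.
  by have [h1 h2] := hb e; rewrite se s1 mulr1 in h1 h2; rewrite h1 h2.
have xpos : forall i, 0 < `|x i|.
  by move=> i; have /andP [h _] := hx i; apply: lt_le_trans h.
exists (fun i => `|x i|^-1 *: x i); split.
  split.
    by move=> i j ij; apply: disj_scale; apply: hd.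
  by move=> i; rewrite normrZ normfV normr_id mulVf // gt_eqF.
move=> a.
have -> : \sum_i a i *: (`|x i|^-1 *: x i) = \sum_i (a i / `|x i|) *: x i.
  by apply: eq_bigr => i _; rewrite scalerA.
have [_ h] := hb (fun i => a i / `|x i|).
apply: le_trans h _; apply: ler_wpM2l; first by apply: addr_ge0 => //; apply: ltW.
apply: supnorm_le; first exact: supnorm_ge0.
move=> i; rewrite normrM normfV normr_id.
rewrite ler_pdivrMr //; apply: le_trans (supnorm_ge a i) _.
apply: ler_peMr; first exact: supnorm_ge0.
by have /andP [] := hx i.
Qed.

Lemma PhiE n (a : 'I_n -> R) : linfty_flr L -> Phi L a = supnorm a.
Proof.
move=> H; rewrite /Phi; apply: le_anti; apply/andP; split.
  have hlb : has_lbound [set `|\sum_(i < n) a i *: x i| | x in @Bn _ _ L n].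
    by exists 0 => z [x _ <-].
  apply/ler_addgt0Pr => e e0.
  set s := supnorm a.
  have s0 : 0 <= s by apply: supnorm_ge0.
  have ep : 0 < e / (s + 1) by apply: divr_gt0 => //; apply: ltr_wpDl.
  have [y [yB yb]] := flr_tuple n H ep.
  apply: le_trans (ge_inf hlb (ex_intro2 _ _ y yB erefl)) _.
  apply: le_trans (yb a) _; rewrite -/s mulrDl mul1r lerD2l.
  rewrite mulrAC ler_pdivrMr; last by apply: ltr_wpDl.
  by rewrite mulrDr mulr1 lerDl ltW.
have [y [yB _]] := flr_tuple n H (ltr01 : (0 : R) < 1).
apply: lb_le_inf.
  by exists (`|\sum_(i < n) a i *: y i|); exists y.
by move=> z [x xB <-]; apply: Bn_lower.
Qed.

Lemma XLnE n (a : 'I_n -> R) : linfty_flr L -> XLn_norm L a = supnorm a.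
Proof.
move=> H; rewrite /XLn_norm.
have mem : [set \sum_(b <- s) Phi L b | s in [set s : seq ('I_n -> R) | forall i, a i = \sum_(b <- s) b i]]
    (supnorm a).
  by exists [:: a]; [move=> i; rewrite big_seq1 | rewrite big_seq1 PhiE].
apply: le_anti; apply/andP; split.
  apply: ge_inf mem; exists 0 => z [s _ <-].
  by apply: sumr_ge0 => b _; rewrite PhiE //; apply: supnorm_ge0.
apply: lb_le_inf; first by exists (supnorm a).
move=> z [s hs <-].
rewrite (eq_bigr (fun b => supnorm b)); last by move=> b _; rewrite PhiE.
have -> : a = (fun i => \sum_(b <- s) b i) by apply: funext.
exact: supnorm_sum.
Qed.

End Main.

Theorem mainTheorem16 (R : realType) (X : completeNormedModType R)
    (L : banach_lattice X) :
  infinite_dimensional X -> linfty_flr L ->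
  forall a : nat -> R, XL_norm L a = linf_norm a.
Proof.
move=> _ H a; rewrite /XL_norm /linf_norm; apply: le_anti; apply/andP; split.
  apply: ge_ereal_sup => z [n _ <-]; rewrite XLnE //.
  case: n => [|n].
    rewrite /supnorm big_ord0.
    apply: le_trans (ereal_sup_ubound (ex_intro2 _ _ 0%N I erefl)).
    by rewrite lee_fin.
  rewrite /supnorm; have [i _ ->] := @eq_bigmax _ _ _ 0 (@ord0 n) predT (fun i : 'I_n.+1 => `|a i|) isT
    (fun i _ => normr_ge0 _).
  exact: ereal_sup_ubound (ex_intro2 _ _ (nat_of_ord i) I erefl).
apply: ge_ereal_sup => z [i _ <-].
apply: le_trans (ereal_sup_ubound (ex_intro2 _ _ i.+1 I erefl)).
rewrite XLnE // lee_fin.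
exact: (supnorm_ge (fun j : 'I_i.+1 => a j) ord_max).
Qed.
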